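(* Let $\mathbf{C}=\mathbf{FdHilb}$, let $A$ be a finite-dimensional Hilbert space, and let $X=\mathbb{C}^{n}$ with the classical object $\delta:|i\rangle\mapsto|ii\rangle$, $\epsilon:|i\rangle\mapsto 1$. Then the abstract POVMs on $A$ with outcomes in $X$ (in the sense defined below) are exactly the maps of the form $\rho\mapsto\sum_{i=1}^n\mathrm{Tr}(g_i\rho g_i^\dagger)\,|i\rangle\langle i|$ where $g_1,\dots,g_n$ are linear operators on $A$ with $\sum_i g_i^\dagger g_i=1_A$, i.e. exactly the maps $\rho\mapsto\sum_i\mathrm{Tr}(F_i\rho)|i\rangle\langle i|$ for POVMs $\{F_i\}_{i=1}^n$ (positive operators $F_i$ with $\sum_i F_i=1_A$) in the usual sense.
   Context: Classical object: in a $\dagger$-compact category, an object $X$ with $\delta: X\to X\otimes X$, $\epsilon: X\to I$ forming a special ($\delta^\dagger\circ\delta=1_X$) commutative comonoid satisfying $\delta\circ\delta^\dagger=(1_X\otimes\delta^\dagger)\circ(\delta\otimes 1_X)$ and with $\eta_X=\delta\circ\epsilon^\dagger$ (so $X^*=X$). $\mathbf{CPM}(\mathbf{C})$ is Selinger's category whose objects are those of $\mathbf{C}$ and whose morphisms $A\to B$ are the completely positive morphisms $A\otimes A^*\to B\otimes B^*$ of $\mathbf{C}$ (those of the form $(1_B\otimes\eta_C^\dagger\otimes 1_{B^*})\circ(h\otimes h_* )$ up to symmetry, for some $h:A\to B\otimes C$); $Pure(f)=f\otimes f_*$. In $\mathbf{CPM}(\mathbf{FdHilb})$ these are the usual completely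 positive maps, $f\otimes f_*$ acts as $\rho\mapsto f\rho f^\dagger$ and partial trace is the usual one. Decohere $:=\delta\circ\delta^\dagger$ viewed as a morphism $X\to X$ in $\mathbf{CPM}(\mathbf{C})$ (equivalently $(1_X\otimes\eta_X^\dagger\otimes1_X)\circ(\delta\otimes\delta)$). An $X$-isometry is $\mathcal{V}: X\otimes A\to B$ such that $\mathcal{V}_\delta:=(1_X\otimes\mathcal{V})\circ(\delta\otimes1_A)$ satisfies $\mathcal{V}_\delta^\dagger\circ\mathcal{V}_\delta=1_{X\otimes A}$. A morphism $g: A\to X\otimes A$ is $X$-positive if $(\delta^\dagger\otimes 1_A)\circ(1_X\otimes g): X\otimes A\to X\otimes A$ equals $k\circ k^\dagger$ for some object $B$ and morphism $k: B\to X\otimes A$. A morphism $f: A\to X\otimes B$ is $X$-polar-decomposable if $f=\mathcal{V}_\delta\circ g$ for some $X$-positive $g:A\to X\otimes A$ and $X$-isometry $\mathcal{V}:X\otimes A\to B$. An abstract POVM on $A$ with outcomes in $X$ is the morphism $A\to X$ of $\mathbf{CPM}(\mathbf{C})$ obtained from an $X$-polar-decomposable $f: A\to X\otimes A$ with $f^\dagger\circ f=1_A$ by applying $Pure(f)=f\otimes f_*$, then Decohere on the $X$-part, then tracing out $A$ (i.e. $\mathrm{tr}^A[\mathrm{Decohere}\circ(f\otimes f_* )]$). *)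

(* Defs.v *)
(* A finite-dimensional Hilbert space is represented by a finite orthonormal basis
   index type; a linear map A -> B is its matrix, a function B -> A -> C. *)
From mathcomp Require Import all_boot all_order all_algebra.
Set Implicit Arguments. Unset Strict Implicit. Unset Printing Implicit Defensive.
Import Order.TTheory GRing.Theory Num.Theory.
Local Open Scope ring_scope.

Section FdHilb.
Variable C : numClosedFieldType.

(* morphisms A -> B of FdHilb: matrix entries f b a = <b| f |a> *)
Definition mor (A B : finType) := B -> A -> C.

Definition meq (A B : finType) (f g : mor A B) := forall b a, f b a = g b a.

Definition comp (A B D : finType) (g : mor B D) (f : mor A B) : mor A D :=
  fun d a => \sum_(b : B) g d b * f b a.

Definition dag (A B : finType) (f : mor A B) : mor B A := fun a b => (f b a)^*.

Definition idm (A : finType) : mor A A := fun a a' => (a == a')%:R.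
Arguments idm : clear implicits.

Definition tens (A B A' B' : finType) (f : mor A B) (g : mor A' B')
  : mor (A * A')%type (B * B')%type :=
  fun bb aa => f bb.1 aa.1 * g bb.2 aa.2.

Definition assoc (A B D : finType) : mor ((A * B) * D)%type (A * (B * D))%type :=
  fun y x => (y == (x.1.1, (x.1.2, x.2)))%:R.

Definition delta (n : nat) : mor 'I_n ('I_n * 'I_n)%type :=
  fun p i => ((p.1 == i) && (p.2 == i))%:R.
Definition eps (n : nat) : mor 'I_n unit := fun _ _ => 1.

Definition Vdelta (n : nat) (A B : finType) (V : mor ('I_n * A)%type B)
  : mor ('I_n * A)%type ('I_n * B)%type :=
  comp (tens (idm 'I_n) V) (comp (@assoc 'I_n 'I_n A) (tens (@delta n) (idm A))).

Definition X_isometry (n : nat) (A B : finType) (V : mor ('I_n * A)%type B) :=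
  meq (comp (dag (Vdelta V)) (Vdelta V)) (idm ('I_n * A)%type).

Definition X_positive (n : nat) (A : finType) (g : mor A ('I_n * A)%type) :=
  exists (p : nat) (k : mor 'I_p ('I_n * A)%type),
    meq (comp (tens (dag (@delta n)) (idm A))
              (comp (dag (@assoc 'I_n 'I_n A)) (tens (idm 'I_n) g)))
        (comp k (dag k)).

Definition X_polar_decomposable (n : nat) (A B : finType) (f : mor A ('I_n * B)%type) :=
  exists (g : mor A ('I_n * A)%type) (V : mor ('I_n * A)%type B),
    X_positive g /\ X_isometry V /\ meq f (comp (Vdelta V) g).

(* Action on operators rho : A -> A of CPM morphisms *)
Definition pure (A B : finType) (f : mor A B) (rho : mor A A) : mor B B :=
  comp f (comp rho (dag f)).

(* Decohere = delta o delta^dag as a CPM morphism X -> X, tensored (in CPM) with 1_A,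
   acting on an operator sigma on X (x) A *)
Definition decohere (n : nat) (A : finType) (sigma : mor ('I_n * A)%type ('I_n * A)%type)
  : mor ('I_n * A)%type ('I_n * A)%type :=
  fun xa ya => \sum_(y : 'I_n) \sum_(y' : 'I_n)
     comp (@delta n) (dag (@delta n)) (xa.1, ya.1) (y, y') * sigma (y, xa.2) (y', ya.2).

Definition ptrA (n : nat) (A : finType) (sigma : mor ('I_n * A)%type ('I_n * A)%type)
  : mor 'I_n 'I_n :=
  fun x x' => \sum_(a : A) sigma (x, a) (x', a).

Definition abstract_povm_map (n : nat) (A : finType) (f : mor A ('I_n * A)%type)
  (rho : mor A A) : mor 'I_n 'I_n :=
  ptrA (decohere (pure f rho)).

Definition is_abstract_POVM (n : nat) (A : finType) (Phi : mor A A -> mor 'I_n 'I_n) :=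
  exists f : mor A ('I_n * A)%type,
    X_polar_decomposable f /\ meq (comp (dag f) f) (idm A) /\
    forall rho, meq (Phi rho) (abstract_povm_map f rho).

Definition trace (A : finType) (M : mor A A) : C := \sum_(a : A) M a a.

Definition proj (n : nat) (i : 'I_n) : mor 'I_n 'I_n :=
  fun x x' => ((x == i) && (x' == i))%:R.

Definition kraus_form (n : nat) (A : finType) (Phi : mor A A -> mor 'I_n 'I_n) :=
  exists g : 'I_n -> mor A A,
    meq (fun a a' => \sum_(i < n) comp (dag (g i)) (g i) a a') (idm A) /\
    forall rho, meq (Phi rho)
      (fun x x' => \sum_(i < n) trace (comp (g i) (comp rho (dag (g i)))) * proj i x x').

Definition positive_op (A : finType) (F : mor A A) :=
  forall v : A -> C, 0 <= \sum_(a : A) \sum_(b : A) (v a)^* * F a b * v b.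

Definition povm_form (n : nat) (A : finType) (Phi : mor A A -> mor 'I_n 'I_n) :=
  exists F : 'I_n -> mor A A,
    (forall i, positive_op (F i)) /\
    meq (fun a a' => \sum_(i < n) F i a a') (idm A) /\
    forall rho, meq (Phi rho)
      (fun x x' => \sum_(i < n) trace (comp (F i) rho) * proj i x x').

End FdHilb.

(* Main.v *)
From Pilot Require Import Defs.
From mathcomp Require Import all_boot all_order all_algebra.
From mathcomp Require Import sesquilinear spectral.
From Stdlib Require Import FunctionalExtensionality ClassicalEpsilon.
From mathcomp Require Import ring.
Import Pilot.Defs.
Set Implicit Arguments. Unset Strict Implicit.
Import GRing.Theory Num.Theory.
Local Open Scope ring_scope.
Local Open Scope sesquilinear_scope.

Section S.
Variable C : numClosedFieldType.

Lemma sum_enum (T : finType) (G : T -> C) :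
  \sum_(x : T) G x = \sum_(i < #|T|) G (enum_val i).
Proof.
rewrite (reindex (@enum_val T T)) //; apply: onW_bij; exact: enum_val_bij.
Qed.

Lemma sum_indl (T : finType) (a : T) (G : T -> C) :
  \sum_(z : T) (z == a)%:R * G z = G a.
Proof.
rewrite (bigD1 a) //= big1 => [|z /negbTE ->]; by rewrite ?eqxx ?mul1r ?addr0 ?mul0r.
Qed.

Lemma sum_indr (T : finType) (a : T) (G : T -> C) :
  \sum_(z : T) G z * (z == a)%:R = G a.
Proof. rewrite -[RHS](sum_indl a); apply: eq_bigr => z _; exact: mulrC. Qed.

Lemma sum2_add (T U : finType) (f g : T -> U -> C) :
  \sum_z \sum_w (f z w + g z w) = \sum_z \sum_w f z w + \sum_z \sum_w g z w.
Proof. by under eq_bigr do rewrite big_split; rewrite big_split. Qed.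

Lemma sum2_scale (T U : finType) (c : C) (f : T -> U -> C) :
  \sum_z \sum_w (c * f z w) = c * \sum_z \sum_w f z w.
Proof. by under eq_bigr do rewrite -mulr_sumr; rewrite -mulr_sumr. Qed.

Lemma sum2_ind (T : finType) (a b : T) (G : T -> T -> C) :
  \sum_z \sum_w (z == a)%:R * ((w == b)%:R * G z w) = G a b.
Proof.
under eq_bigr do rewrite -mulr_sumr sum_indl. by rewrite sum_indl.
Qed.

Lemma pos_real (A : finType) (F : mor C A A) (v : A -> C) :
  positive_op F -> let q := \sum_(a : A) \sum_(b : A) (v a)^* * F a b * v b in q^* = q.
Proof. by move=> /(_ v) hp /=; apply: conj_Creal; apply: ger0_real. Qed.

Lemma pos_expand (A : finType) (F : mor C A A) (a b : A) (c : C) :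
  let v := fun z : A => (z == a)%:R + c * (z == b)%:R in
  \sum_(z : A) \sum_(w : A) (v z)^* * F z w * v w =
   F a a + c * F a b + c^* * F b a + c^* * c * F b b.
Proof.
move=> v.
have E : forall z w, (v z)^* * F z w * v w =
   (z==a)%:R * ((w==a)%:R * F z w) + c * ((z==a)%:R * ((w==b)%:R * F z w))
   + c^* * ((z==b)%:R * ((w==a)%:R * F z w))
   + c^* * c * ((z==b)%:R * ((w==b)%:R * F z w)).
  by move=> z w; rewrite /v rmorphD rmorphM /= !conjC_nat; ring.
under eq_bigr do under eq_bigr do rewrite E.
by rewrite !sum2_add !sum2_scale !sum2_ind.
Qed.

Lemma pos_herm (A : finType) (F : mor C A A) :
  positive_op F -> forall a b, F b a = (F a b)^*.
Proof.
move=> hp a b.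
have R0 := pos_real (fun z : A => (z == a)%:R + 0 * (z == b)%:R) hp.
have R0' := pos_real (fun z : A => (z == b)%:R + 0 * (z == a)%:R) hp.
have R1 := pos_real (fun z : A => (z == a)%:R + 1 * (z == b)%:R) hp.
have R2 := pos_real (fun z : A => (z == a)%:R + 'i * (z == b)%:R) hp.
rewrite /= !pos_expand in R0 R0' R1 R2.
rewrite !rmorphD !rmorphM /= ?conjCK ?conjCi ?rmorph0 ?rmorph1 in R0 R0' R1 R2.
set x := F a b in R0 R0' R1 R2 *; set y := F b a in R0 R0' R1 R2 *.
set p := F a a in R0 R0' R1 R2; set s := F b b in R0 R0' R1 R2.
have hp0 : p^* = p by move: R0; rewrite !mul0r !addr0.
have hs0 : s^* = s by move: R0'; rewrite !mul0r !addr0.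
rewrite hp0 hs0 in R1 R2.
have D1 : x^* + y^* - x - y = 0.
  by move/eqP: R1; rewrite -subr_eq0 => /eqP <-; ring.
have D2 : 'i * (y^* - x^* + y - x) = 0.
  by move/eqP: R2; rewrite -subr_eq0 => /eqP <-; ring.
move/eqP: D2; rewrite mulf_eq0 (negbTE (neq0Ci C)) /= => /eqP D2.
have : (2%:R : C) * (y - x^*) = 0.
  by rewrite -[RHS](subr0 0); rewrite -{1}D2 -D1; ring.
move/eqP; rewrite mulf_eq0 pnatr_eq0 /= subr_eq0 => /eqP.
by [].
Qed.

Lemma core_mx m (M : 'M[C]_m) :
  M^t* = M -> (forall u : 'rV[C]_m, 0 <= (u *m M *m u^t*) 0 0) ->
  exists K : 'M[C]_m, (K *m K^t*) *m (K *m K^t*) = M.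
Proof.
move=> hM hpos.
have nM : M \is normalmx by apply/normalmxP; rewrite hM.
have eM := orthomx_spectralP nM.
set P := spectralmx M in eM; set d := spectral_diag M in eM.
have Pu : P \is unitarymx := spectral_unitarymx M.
have PP : P *m P^t* = 1%:M by apply/unitarymxP.
rewrite invmx_unitary // in eM.
have dpos : forall j, 0 <= d 0 j.
  move=> j; have := hpos (row j P).
  have -> : (row j P *m M *m (row j P)^t*) 0 0 = (P *m M *m P^t*) j j.
    rewrite !mxE; apply: eq_bigr => b _; rewrite !mxE; congr (_ * _).
    by apply: eq_bigr => a _; rewrite !mxE.
  rewrite {1}eM !mulmxA PP mul1mx -mulmxA PP mulmx1.
  by rewrite mxE eqxx mulr1n.
pose t := \row_j sqrtC (sqrtC (d 0 j)).
exists (P^t* *m diag_mx t).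
have tt : forall j, t 0 j * (t 0 j)^* = sqrtC (d 0 j).
  move=> j; rewrite mxE geC0_conj ?sqrtC_ge0 // -expr2 sqrtCK //.
have KK : (P^t* *m diag_mx t) *m (P^t* *m diag_mx t)^t*
          = P^t* *m diag_mx (\row_j sqrtC (d 0 j)) *m P.
  rewrite trmx_mul map_mxM trmxCK tr_diag_mx map_diag_mx.
  rewrite -!mulmxA [diag_mx t *m _]mulmxA mulmx_diag; congr (_ *m (diag_mx _ *m _)).
  by apply/rowP => j; rewrite !mxE /= geC0_conj ?sqrtC_ge0 // -expr2 sqrtCK.
rewrite KK -!mulmxA [P *m _]mulmxA PP mul1mx [diag_mx _ *m (_ *m _)]mulmxA mulmx_diag.
rewrite [in RHS]eM -!mulmxA; congr (_ *m (diag_mx _ *m _)).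
by apply/rowP => j; rewrite !mxE -expr2 sqrtCK.
Qed.

Definition toM (A : finType) (F : mor C A A) : 'M[C]_#|A| :=
  \matrix_(i, j) F (enum_val i) (enum_val j).
Definition ofM (A : finType) (K : 'M[C]_#|A|) : mor C A A :=
  fun a b => K (enum_rank a) (enum_rank b).

Lemma ofM_mul (A : finType) (K L : 'M[C]_#|A|) :
  comp (ofM (A:=A) K) (ofM (A:=A) L) = ofM (A:=A) (K *m L).
Proof.
apply: functional_extensionality => a; apply: functional_extensionality => c.
rewrite /comp /ofM mxE sum_enum; apply: eq_bigr => i _; by rewrite enum_valK.
Qed.

Lemma ofM_dag (A : finType) (K : 'M[C]_#|A|) : dag (ofM (A:=A) K) = ofM (A:=A) (K^t*).
Proof.
apply: functional_extensionality => a; apply: functional_extensionality => c.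
by rewrite /dag /ofM !mxE.
Qed.

Lemma ofM_toM (A : finType) (F : mor C A A) : ofM (toM F) = F.
Proof.
apply: functional_extensionality => a; apply: functional_extensionality => c.
by rewrite /ofM /toM mxE !enum_rankK.
Qed.

Lemma core_mor (A : finType) (F : mor C A A) : positive_op F ->
  exists k : mor C A A, comp (comp k (dag k)) (comp k (dag k)) = F.
Proof.
move=> hp; have hh := pos_herm hp.
have [K hK] : exists K : 'M[C]_#|A|, (K *m K^t*) *m (K *m K^t*) = toM F.
  apply: core_mx.
    by apply/matrixP => i j; rewrite !mxE /= -hh.
  move=> u; have := hp (fun a => (u 0 (enum_rank a))^*).
  have -> : (u *m toM F *m u^t*) 0 0 =
    \sum_(a : A) \sum_(b : A) ((u 0 (enum_rank a))^*)^* * F a b * (u 0 (enum_rank b))^*.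
    rewrite mxE [RHS]exchange_big [RHS]sum_enum; apply: eq_bigr => j _.
    rewrite !mxE big_distrl [RHS]sum_enum; apply: eq_bigr => i _.
    by rewrite !mxE /= conjCK !enum_valK.
  done.
exists (ofM K); by rewrite ofM_dag !ofM_mul hK ofM_toM.
Qed.

Lemma natrA (b c : bool) : ((b && c)%:R : C) = b%:R * c%:R.
Proof. by rewrite -mulnb natrM. Qed.

Lemma sum3_swap (T U V : finType) (F : T -> U -> V -> C) :
  \sum_c \sum_b \sum_a F a b c = \sum_a \sum_b \sum_c F a b c.
Proof.
rewrite exchange_big /=; under eq_bigr do rewrite exchange_big /=.
by rewrite exchange_big.
Qed.

Lemma trace_pure (A : finType) (g rho : mor C A A) :
  trace (comp g (comp rho (dag g))) = trace (comp (comp (dag g) g) rho).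
Proof.
rewrite /trace /comp /dag.
under eq_bigr do (under eq_bigr do rewrite big_distrr).
rewrite -sum3_swap; apply: eq_bigr => c _; apply: eq_bigr => b _.
rewrite big_distrl; apply: eq_bigr => a _ /=; ring.
Qed.

Lemma pos_gram (A : finType) (g : mor C A A) : positive_op (comp (dag g) g).
Proof.
move=> v.
have -> : \sum_a \sum_b (v a)^* * comp (dag g) g a b * v b =
   \sum_c (\sum_b g c b * v b)^* * (\sum_b g c b * v b).
  rewrite /comp /dag.
  under eq_bigr do (under eq_bigr do rewrite mulr_sumr mulr_suml).
  under [RHS]eq_bigr do rewrite rmorph_sum big_distrl.
  under [RHS]eq_bigr do (under eq_bigr do rewrite big_distrr).
  rewrite [RHS](exchange_big_dep xpredT) //=.
  under [RHS]eq_bigr do rewrite exchange_big.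
  apply: eq_bigr => a _; apply: eq_bigr => b _; apply: eq_bigr => c _ /=.
  rewrite rmorphM /=; ring.
by apply: sumr_ge0 => c _; rewrite mulrC; exact: mul_conjC_ge0.
Qed.

Lemma dag_gram (A : finType) (k : mor C A A) :
  dag (comp k (dag k)) = comp k (dag k).
Proof.
apply: functional_extensionality => a; apply: functional_extensionality => b.
rewrite /dag /comp rmorph_sum; apply: eq_bigr => c _.
by rewrite rmorphM /= conjCK mulrC.
Qed.

Lemma delta_eq (n : nat) (p : 'I_n * 'I_n) (i : 'I_n) :
  @delta C n p i = (p == (i, i))%:R.
Proof. by case: p => p1 p2; rewrite /delta xpair_eqE. Qed.

Lemma Vdelta_eq (n : nat) (A B : finType) (V : mor C ('I_n * A)%type B) p q :
  Vdelta V p q = (p.1 == q.1)%:R * V p.2 (q.1, q.2).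
Proof.
rewrite /Vdelta {1}/comp.
have inner : forall s, comp (@assoc C 'I_n 'I_n A) (tens (@delta C n) (@idm C A)) s q
    = (s == (q.1, (q.1, q.2)))%:R.
  move=> s; rewrite /comp.
  transitivity (\sum_(r : ('I_n * 'I_n * A)%type)
     @assoc C 'I_n 'I_n A s r * (r == ((q.1, q.1), q.2))%:R).
    apply: eq_bigr => -[[r1 r2] r3] _; congr (_ * _).
    rewrite /tens /idm delta_eq /= -natrM mulnb.
    by rewrite [in RHS]xpair_eqE.
  by rewrite sum_indr /assoc.
under eq_bigr do rewrite inner.
by rewrite sum_indr /tens /idm.
Qed.

Lemma Xpos_eq (n : nat) (A : finType) (g : mor C A ('I_n * A)%type) p q :
  comp (tens (dag (@delta C n)) (@idm C A))
       (comp (dag (@assoc C 'I_n 'I_n A)) (tens (@idm C 'I_n) g)) p q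
  = (p.1 == q.1)%:R * g (p.1, p.2) q.2.
Proof.
rewrite {1}/comp.
transitivity (\sum_(r : ('I_n * 'I_n * A)%type) (r == ((p.1, p.1), p.2))%:R *
   comp (dag (@assoc C 'I_n 'I_n A)) (tens (@idm C 'I_n) g) r q).
  apply: eq_bigr => -[[r1 r2] r3] _; congr (_ * _).
  rewrite /tens /idm /dag delta_eq conjC_nat /= -natrM mulnb.
  by rewrite [in RHS]xpair_eqE (eq_sym p.2).
rewrite sum_indl /comp.
transitivity (\sum_(s : ('I_n * ('I_n * A))%type) (s == (p.1, (p.1, p.2)))%:R *
   tens (@idm C 'I_n) g s q).
  by apply: eq_bigr => s _; rewrite /dag /assoc conjC_nat.
by rewrite sum_indl /tens /idm /=.
Qed.

Lemma decohere_eq (n : nat) (A : finType) (sigma : mor C ('I_n * A)%type ('I_n * A)%type) p q :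
  decohere sigma p q = (p.1 == q.1)%:R * sigma (p.1, p.2) (p.1, q.2).
Proof.
rewrite /decohere.
transitivity (\sum_(y : 'I_n) \sum_(y' : 'I_n)
   (y == p.1)%:R * ((y' == p.1)%:R * ((p.1 == q.1)%:R * sigma (y, p.2) (y', q.2)))).
  apply: eq_bigr => y _; apply: eq_bigr => y' _.
  rewrite /comp /dag (bigD1 p.1) //= big1 => [|i ne].
    rewrite !delta_eq conjC_nat !xpair_eqE /= eqxx addr0 /=.
    rewrite !natrA [(q.1 == p.1)]eq_sym; ring.
  by rewrite !delta_eq !xpair_eqE /= (eq_sym p.1) (negbTE ne) mul0r.
by rewrite (sum2_ind p.1 p.1 (fun y y' => (p.1 == q.1)%:R * sigma (y, p.2) (y', q.2))).
Qed.

Definition gk (n : nat) (A : finType) (f : mor C A ('I_n * A)%type) (i : 'I_n) : mor C A A :=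
  fun a b => f (i, a) b.

Lemma apm_eq (n : nat) (A : finType) (f : mor C A ('I_n * A)%type) rho x x' :
  abstract_povm_map f rho x x' =
  (x == x')%:R * trace (comp (gk f x) (comp rho (dag (gk f x)))).
Proof.
rewrite /abstract_povm_map /ptrA.
under eq_bigr do rewrite decohere_eq /=.
by rewrite -mulr_sumr.
Qed.

Lemma kraus_eq (n : nat) (T : 'I_n -> C) x x' :
  \sum_(i < n) T i * proj C i x x' = (x == x')%:R * T x.
Proof.
rewrite (bigD1 x) //= big1; last first.
  by move=> i ne; rewrite /proj (eq_sym x) (negbTE ne) mulr0.
by rewrite /proj eqxx /= addr0 mulrC eq_sym.
Qed.

Lemma comp_idm_l (A B : finType) (f : mor C A B) : comp (@idm C B) f = f.
Proof.
apply: functional_extensionality => b; apply: functional_extensionality => a.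
rewrite /comp /idm; under eq_bigr do rewrite eq_sym.
by rewrite sum_indl.
Qed.

Lemma dag_idm (A : finType) : dag (@idm C A) = @idm C A.
Proof.
apply: functional_extensionality => b; apply: functional_extensionality => a.
by rewrite /dag /idm conjC_nat eq_sym.
Qed.

Definition sqk (A : finType) (F : mor C A A) (hp : positive_op F) : mor C A A :=
  proj1_sig (constructive_indefinite_description _ (core_mor hp)).

Lemma sqkP (A : finType) (F : mor C A A) (hp : positive_op F) :
  let k := sqk hp in comp (comp k (dag k)) (comp k (dag k)) = F.
Proof. exact: (proj2_sig (constructive_indefinite_description _ (core_mor hp))). Qed.
End S.

Theorem mainTheorem2 (C : numClosedFieldType) (n : nat) (A : finType)
    (Phi : mor C A A -> mor C 'I_n 'I_n) :
  (is_abstract_POVM Phi <-> kraus_form Phi) /\ (kraus_form Phi <-> povm_form Phi).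
Proof.
split; split.
- move=> [f [_ [hf hPhi]]]; exists (gk f); split.
    move=> a a'; rewrite -(hf a a') /comp /dag /gk pair_bigA.
    by apply: eq_bigr => -[i b] _.
  by move=> rho x x'; rewrite hPhi apm_eq kraus_eq.
- move=> [g [hg hPhi]].
  pose k i := sqk (pos_gram (g i)).
  pose h i := comp (k i) (dag (k i)).
  have hk : forall i, comp (h i) (h i) = comp (dag (g i)) (g i).
    by move=> i; exact: sqkP.
  pose f : mor C A ('I_n * A)%type := fun p a => h p.1 p.2 a.
  pose V : mor C ('I_n * A)%type A := fun b r => (b == r.2)%:R.
  have VdI : Vdelta V = @idm C ('I_n * A)%type.
    apply: functional_extensionality => p; apply: functional_extensionality => q.
    rewrite Vdelta_eq /V /idm /= -natrM mulnb.
    by case: p q => [p1 p2] [q1 q2]; rewrite xpair_eqE.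
  exists f; split; [|split].
  + exists f, V; split; [|split].
    * exists #|{: ('I_n * A)%type}|.
      exists (fun p j => ((enum_val j).1 == p.1)%:R * k p.1 p.2 (enum_val j).2).
      move=> [p1 p2] [q1 q2]; rewrite Xpos_eq /comp /dag /=.
      rewrite -(sum_enum (fun z : ('I_n * A)%type => (z.1 == p1)%:R * k p1 p2 z.2 *
                  ((z.1 == q1)%:R * k q1 q2 z.2)^*)).
      rewrite -(pair_bigA _ (fun (i : 'I_n) (c : A) => (i == p1)%:R * k p1 p2 c *
                  ((i == q1)%:R * k q1 q2 c)^*)) /=.
      under eq_bigr do under eq_bigr do rewrite -mulrA.
      under eq_bigr do rewrite -mulr_sumr.
      rewrite sum_indl.
      case: (eqVneq p1 q1) => [<-|ne].
        rewrite mul1r /f /h /comp /dag /=; apply: eq_bigr => c _.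
        by rewrite rmorphM /= conjC_nat mul1r.
      rewrite mul0r; symmetry; apply: big1 => c _.
      by rewrite rmorphM /= conjC_nat mul0r mulr0.
    * by rewrite /X_isometry VdI dag_idm comp_idm_l.
    * by rewrite VdI comp_idm_l.
  + move=> a a'; rewrite -(hg a a').
    transitivity (\sum_(i < n) comp (dag (h i)) (h i) a a').
      rewrite /comp /dag pair_bigA.
      by apply: eq_bigr => -[i b] _.
    by apply: eq_bigr => i _; rewrite dag_gram hk.
  + move=> rho x x'; rewrite hPhi apm_eq kraus_eq; congr (_ * _).
    rewrite trace_pure.
    have -> : gk f x = h x by [].
    by rewrite trace_pure dag_gram hk.
- move=> [g [hg hPhi]].
  exists (fun i => comp (dag (g i)) (g i)); split; [|split].
  + by move=> i; exact: pos_gram.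
  + exact: hg.
  + move=> rho x x'; rewrite hPhi; apply: eq_bigr => i _.
    by rewrite trace_pure.
- move=> [F [hpos [hs hPhi]]].
  pose k i := sqk (hpos i).
  pose h i := comp (k i) (dag (k i)).
  have hk : forall i, comp (h i) (h i) = F i by move=> i; exact: sqkP.
  exists h; split.
  + by move=> a a'; rewrite -(hs a a'); apply: eq_bigr => i _; rewrite dag_gram hk.
  + move=> rho x x'; rewrite hPhi; apply: eq_bigr => i _.
    by rewrite trace_pure dag_gram hk.
Qed.
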